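(* Let $G$ be a finite graph with $\nabla(G) = k$. Then $\kappa(G)\leq k+1$.
   Context: For a graph $G$, a set $S\subseteq V(G)$ is a decycling set of $G$ if $G - S$ is acyclic (a forest). The decycling number $\nabla(G)$ is the smallest size of a decycling set of $G$. $\kappa(G)$ denotes the (vertex) connectivity of $G$. *)

(* Defs.v *)
(* A finite simple graph is a symmetric irreflexive relation
   e on a finite vertex type T. *)
From mathcomp Require Import all_boot.
From mathcomp Require Import boolp.

Set Implicit Arguments.
Unset Strict Implicit.
Unset Printing Implicit Defensive.

Section Graph.
Variables (T : finType) (e : rel T).

(* A cycle of G avoiding S (i.e. a cycle of G - S): a sequence of at least
   3 pairwise distinct vertices, none in S, consecutive ones (cyclically)
   adjacent. *)
Definition cycle_avoiding (S : {set T}) (c : seq T) : Prop :=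
  [/\ 2 < size c, uniq c, cycle e c & all (fun x => x \notin S) c].

Definition decycling (S : {set T}) : Prop :=
  forall c : seq T, ~ cycle_avoiding S c.

Lemma decycling_setT : decycling setT.
Proof.
move=> [|x c] [] //= _ _ _; by rewrite in_setT.
Qed.

Lemma decycling_exists : exists n, `[< exists S : {set T}, #|S| = n /\ decycling S >].
Proof. exists #|[set: T]|; apply/asboolP; exists setT; split=> //; exact: decycling_setT. Qed.

Definition decycling_number : nat := ex_minn decycling_exists.

Definition rel_minus (S : {set T}) : rel T :=
  fun x y => [&& e x y, x \notin S & y \notin S].

Definition separating (S : {set T}) : bool :=
  (#|~: S| <= 1) ||
  [exists x, exists y, [&& x \notin S, y \notin S & ~~ connect (rel_minus S) x y]].

Lemma separating_exists : exists n, [exists S : {set T}, (#|S| == n) && separating S].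
Proof.
exists #|[set: T]|; apply/existsP; exists setT; rewrite eqxx /separating.
by rewrite setCT cards0.
Qed.

Definition connectivity : nat := ex_minn separating_exists.

End Graph.

(* Main.v *)
Require Import Defs.
From mathcomp Require Import all_boot.
From mathcomp Require Import boolp.
From mathcomp Require Import zify.

Set Implicit Arguments.
Unset Strict Implicit.
Unset Printing Implicit Defensive.

Section Aux.
Variables (T : finType) (e : rel T).
Hypotheses (esym : symmetric e) (eirr : irreflexive e).

Definition nbr2 (S : {set T}) x := [exists y1, exists y2,
  [&& y1 != y2, e x y1, e x y2, y1 \notin S & y2 \notin S]].

Lemma close_cycle (S : {set T}) x a q y :
  uniq (x :: a :: q) -> path e x (a :: q) -> all (fun z => z \notin S) (x :: a :: q) ->
  e x y -> y \in a :: q -> y != a -> exists c, cycle_avoiding e S c.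
Proof.
move=> Hu Hp Ha Hxy Hy Hya.
have [q1 [q2 E]] : exists q1 q2, a :: q = q1 ++ y :: q2.
  by case/splitPr: Hy => q1 q2; exists q1, q2.
rewrite E in Hu Hp Ha.
have Hs : 0 < size q1.
  move: E; case: (q1) => [|b q1'] // [Ea _]; by rewrite Ea eqxx in Hya.
exists (x :: rcons q1 y); split.
- by rewrite /= size_rcons; lia.
- move: Hu; rewrite -cat_cons -(cat1s y) catA cat_uniq => /andP[+ _].
  by rewrite cats1.
- rewrite /= rcons_path last_rcons esym Hxy andbT.
  move: Hp; rewrite cat_path => /andP[H1 H2].
  by rewrite -cats1 cat_path H1 /=; move: H2 => /= /andP[-> _].
- move: Ha; rewrite -cat_cons -(cat1s y) catA all_cat => /andP[+ _].
  by rewrite cats1.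
Qed.

Lemma step (S : {set T}) x q : (forall x, x \notin S -> nbr2 S x) ->
  uniq (x :: q) -> path e x q -> all (fun z => z \notin S) (x :: q) ->
  (exists c, cycle_avoiding e S c) \/
  (exists y, [/\ e x y, y \notin S & y \notin x :: q]).
Proof.
move=> Hn Hu Hp Ha.
have Hx : x \notin S by move: Ha => /= /andP[].
have /existsP[y1 /existsP[y2 /and5P[Hne H1 H2 Hy1 Hy2]]] := Hn x Hx.
have [y [Hy Hyn Hyh]] : exists y, [/\ e x y, y \notin S &
    forall a q', q = a :: q' -> y != a].
  case: q Hu Hp Ha => [|a q] _ _ _; first by exists y1; split.
  case: (eqVneq y1 a) => [Ea|Hya]; last by exists y1; split=> // ? ? [<- _].
  by exists y2; split=> // ? ? [<- _]; rewrite -Ea eq_sym.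
case: (boolP (y \in x :: q)) => Hin; last by right; exists y.
left.
rewrite inE in Hin; case/orP: Hin => [/eqP Eyx|Hin].
  by move: Hy; rewrite Eyx eirr.
case: q Hu Hp Ha Hin Hyh => [|a q] //= Hu Hp Ha Hin Hyh.
exact: (@close_cycle S x a q y _ _ _ _ _ (Hyh a q erefl)).
Qed.

Lemma grow (S : {set T}) : (forall x, x \notin S -> nbr2 S x) ->
  forall n x q, #|T| - size (x :: q) <= n -> uniq (x :: q) -> path e x q ->
  all (fun z => z \notin S) (x :: q) -> exists c, cycle_avoiding e S c.
Proof.
move=> Hn; elim=> [|n IH] x q Hs Hu Hp Ha.
all: case: (step Hn Hu Hp Ha) => [//|[y [Hy Hyn Hin]]].
all: have := card_uniqP (_ : uniq (y :: x :: q)).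
all: rewrite /= Hin -/(uniq (x :: q)) Hu => /(_ isT) Hc.
all: have := max_card (mem (y :: x :: q)); rewrite Hc /= => Hc'.
  move: Hs; rewrite /=; lia.
apply: (IH y (x :: q)).
+ move: Hs; rewrite /=; lia.
+ by rewrite cons_uniq Hin Hu.
+ by rewrite /= esym Hy Hp.
+ by apply/andP; split.
Qed.

End Aux.

Theorem mainTheorem2 (T : finType) (e : rel T) (k : nat) :
  symmetric e -> irreflexive e ->
  decycling_number e = k ->
  connectivity e <= k + 1.
Proof.
move=> esym eirr.
rewrite /decycling_number; case: ex_minnP => m /asboolP [S [HS Hdec]] _ <-.
have key : forall S' : {set T}, #|S'| <= m + 1 -> separating e S' -> connectivity e <= m + 1.
  move=> S' H1 H2; rewrite /connectivity; case: ex_minnP => c _ Hmin.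
  apply: leq_trans H1; apply: Hmin; apply/existsP; exists S'; by rewrite eqxx.
case: (boolP [exists v, (v \notin S) && ~~ nbr2 e S v]) => [/existsP[v /andP[HvS Hv]]|Hall].
  have [S' [HS' HvS' Hiso]] : exists S' : {set T},
      [/\ #|S'| <= m + 1, v \notin S' & forall y, y \notin S' -> ~~ e v y].
    case: (boolP [exists u, e v u && (u \notin S)]) => [/existsP[u /andP[Hu HuS]]|Hno].
      exists (u |: S); split.
      - by rewrite cardsU1 HS; case: (u \in S) => /=; lia.
      - rewrite in_setU1 negb_or HvS andbT; apply: contraTneq Hu => ->; by rewrite eirr.
      - move=> y; rewrite in_setU1 negb_or => /andP[Hyu HyS]; apply/negP => Hvy.
        move/negP: Hv; apply; apply/existsP; exists u; apply/existsP; exists y.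
        by rewrite eq_sym Hyu Hu Hvy HuS HyS.
    exists S; split; first by rewrite HS addn1.
    - exact: HvS.
    - move=> y HyS; apply/negP => Hvy; move/negP: Hno; apply.
      by apply/existsP; exists y; rewrite Hvy.
  apply: (key S' HS'); rewrite /separating.
  case: leqP => //= H2.
  have [w Hw Hwv] : exists2 w, w \in ~: S' & w != v.
    have : 0 < #|(~: S') :\ v|.
      move: H2; rewrite (cardsD1 v) inE HvS' /=; lia.
    case/card_gt0P => w; rewrite !inE => /andP[Hwv Hw]; exists w; by rewrite ?inE.
  apply/existsP; exists v; apply/existsP; exists w.
  rewrite HvS'; rewrite inE in Hw; rewrite Hw /=.
  apply/negP => /connectP[[|a p] /= Hp Hl]; first by move: Hwv; rewrite Hl eqxx.
  move: Hp => /andP[/and3P[Hva _ HaS] _]; by move: (Hiso a HaS); rewrite Hva.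
case: (boolP [exists v, v \notin S]) => [/existsP[v HvS]|Hemp].
  exfalso.
  have Hn : forall x, x \notin S -> nbr2 e S x.
    move=> x Hx; case: (boolP (nbr2 e S x)) => // H; move/negP: Hall; case.
    by apply/existsP; exists x; rewrite Hx H.
  have Ha : all (fun z => z \notin S) [:: v] by rewrite /= HvS.
  have [c Hc] := @grow _ _ esym eirr S Hn #|T| v [::] (leq_subr _ _) isT isT Ha.
  exact: Hdec Hc.
apply: (key S); first by rewrite HS leq_addr.
rewrite /separating; apply/orP; left.
suff -> : ~: S = set0 by rewrite cards0.
apply/setP => x; rewrite !inE; apply/negP => Hx; move/negP: Hemp; apply; apply/existsP; exists x; exact/negP.
Qed.
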